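(* For every $g\ge 1$, $\det(K_{g+1})=[\det(K_g)]^3\det(A_g)$.
   Context: The graphs $\mathcal{H}_g$ with hubs $v_1,v_2,v_3,v_4$ and orientations $\mathcal{H}_g^e$ are defined recursively. $\mathcal{H}_1$ is the 4-cycle with edges $\{v_1,v_2\},\{v_1,v_3\},\{v_2,v_4\},\{v_3,v_4\}$, oriented $v_1\to v_2$, $v_1\to v_3$, $v_4\to v_2$, $v_3\to v_4$. For $g>1$, take four disjoint copies $\mathcal{H}_{g-1}^{(i)}$, $i=1,\dots,4$, of $\mathcal{H}_{g-1}$, each oriented as a copy of $\mathcal{H}_{g-1}^e$, with hubs $v_k^{(i)}$; identify $v_1^{(1)},v_1^{(4)}$ as $v_1$, $v_2^{(2)},v_1^{(3)}$ as $v_4$, $v_2^{(1)},v_1^{(2)}$ as $v_3$, and $v_2^{(3)},v_2^{(4)}$ as $v_2$; $\mathcal{H}_g^e$ is the union of the copies' orientations. $A_g$ is the skew adjacency matrix of $\mathcal{H}_g^e$: its $(u,v)$ entry is $1$ if $u\to v$ is an arc, $-1$ if $v\to u$ is an arc, and $0$ otherwise. $K_g$ is the submatrix of $A_g$ obtained by deleting the rows and columns corresponding to $v_1$ and $v_2$. *)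

(* Defs.v *)
From mathcomp Require Import all_boot all_order all_algebra.
Set Implicit Arguments. Unset Strict Implicit. Unset Printing Implicit Defensive.
Import GRing.Theory.
Local Open Scope ring_scope.

(* Vertices of H_g are numbered 0 .. nv g - 1, with hubs
   v1 = 0, v2 = 1, v3 = 2, v4 = 3.  (g = 0 is junk: same as g = 1.) *)
Fixpoint nv (g : nat) : nat :=
  match g with
  | 0 => 4
  | 1 => 4
  | g'.+1 => (4 * nv g' - 4)%N
  end.

(* Embedding of vertex k of the copy H_g^{(c+1)} (c = 0..3) into H_{g+1}:
   hub v1^{(c+1)} and v2^{(c+1)} are identified with global hubs
   (copy1: v1,v3; copy2: v3,v4; copy3: v4,v2; copy4: v1,v2);
   every other vertex of the copy becomes a fresh vertex. *)
Definition emb (g c k : nat) : nat :=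
  if k == 0%N then nth 0%N [:: 0; 2; 3; 0]%N c
  else if k == 1%N then nth 0%N [:: 2; 3; 1; 1]%N c
  else (4 + c * (nv g - 2) + (k - 2))%N.

Fixpoint harc (g : nat) (u v : nat) : bool :=
  match g with
  | 0 | 1 =>
      ((u == 0) && (v == 1)) || ((u == 0) && (v == 2)) ||
      ((u == 3) && (v == 1)) || ((u == 2) && (v == 3))
  | g'.+1 =>
      [exists c : 'I_4, exists a : 'I_(nv g'), exists b : 'I_(nv g'),
         [&& harc g' a b, emb g' c a == u & emb g' c b == v]]
  end%N.

Definition skew (g u v : nat) : int :=
  if harc g u v then 1 else if harc g v u then -1 else 0.

Definition A (g : nat) : 'M[int]_(nv g) := \matrix_(i, j) skew g i j.

Definition K (g : nat) : 'M[int]_(nv g - 2) :=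
  \matrix_(i, j) skew g (i + 2)%N (j + 2)%N.

(* Main.v *)
Require Import Defs.
From mathcomp Require Import all_boot all_order all_algebra.
From mathcomp Require Import ring zify.
Import Defs.
Set Implicit Arguments. Unset Strict Implicit. Unset Printing Implicit Defensive.
Import GRing.Theory.
Local Open Scope ring_scope.

Lemma schur (R : comPzRingType) p k (P : 'M[R]_p) (U : 'M_(p,k)) (V : 'M_(k,p)) (D Dadj : 'M_k) (e : R) :
  D *m Dadj = e%:M ->
  \det (block_mx P U V D) * e ^+ p = \det (e *: P - U *m Dadj *m V) * \det D.
Proof.
move=> HD.
have := det_mulmx (block_mx P U V D) (block_mx e%:M 0 (-(Dadj *m V)) 1%:M).
rewrite det_lblock det_scalar det1 mulr1 mulmx_block => <-.
rewrite !mulmx0 !mulmx1 ?addr0 ?add0r !mulmxN !mulmxA HD mul_scalar_mx !mul_mx_scalar subrr.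
by rewrite det_ublock.
Qed.

Definition Sm (R : pzRingType) : 'M[R]_2 := \matrix_(i, j) ((i == 0 :> nat) && (j == 1 :> nat))%:R.

Lemma SZT (R : comPzRingType) (Z : 'M[R]_2) : (forall i, Z i i = 0) ->
  Sm R *m Z *m (Sm R)^T = 0 /\ (Sm R)^T *m Z *m Sm R = 0.
Proof.
move=> HZ; split; apply/matrixP => i j; rewrite !mxE !big_ord_recl !big_ord0 !mxE;
rewrite !big_ord_recl !big_ord0 !mxE /= !HZ;
by rewrite !(mulr0, mul0r, add0r, addr0, andbF).
Qed.

Lemma trN (R : pzRingType) p q (X : 'M[R]_(p,q)) : (- X)^T = - X^T.
Proof. by apply/matrixP => i j; rewrite !mxE. Qed.

Definition Mmat (R : pzRingType) m (B : 'M[R]_2) (Rm : 'M[R]_(2,m)) (K : 'M[R]_m) :=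
  block_mx B (row_mx (Sm R *m Rm) (row_mx Rm ((Sm R)^T *m Rm)))
    (col_mx (- Rm^T *m (Sm R)^T) (col_mx (- Rm^T) (- Rm^T *m Sm R)))
    (block_mx K 0 0 (block_mx K 0 0 K)).
Definition Amat (R : pzRingType) m (B : 'M[R]_2) (Rm : 'M[R]_(2,m)) (K : 'M[R]_m) :=
  block_mx B Rm (- Rm^T) K.

Lemma adj_skew (R : comPzRingType) m (K : 'M[R]_m) : K^T = - K -> ~~ odd m ->
  (\adj K)^T = - \adj K.
Proof.
case: m K => [|m] K HK Hm; first by apply/matrixP => -[].
rewrite trmx_adj HK -scaleN1r adjZ /=.
have -> : (-1 : R) ^+ m = -1 by rewrite -signr_odd; move: Hm => /= /negbNE ->.
by rewrite scaleN1r.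
Qed.

Lemma core (R : idomainType) m (B : 'M[R]_2) (Rm : 'M[R]_(2,m)) (K : 'M[R]_m) :
  K^T = - K -> ~~ odd m -> (2%:R : R) != 0 -> \det K != 0 ->
  \det (Mmat B Rm K) = \det K ^+ 2 * \det (Amat B Rm K).
Proof.
move=> HK Hm H2 Hd.
set d := \det K; set Q := \adj K.
have KQ : K *m Q = d%:M by rewrite mul_mx_adj.
have HQ : Q^T = - Q by apply: adj_skew.
set Z := Rm *m Q *m (- Rm^T).
have HZ : forall i, Z i i = 0.
  have ZT : Z^T = - Z.
    by rewrite /Z !trmx_mul HQ !trN trmxK !(mulmxN, mulNmx, opprK) mulmxA.
  move=> i; have : Z i i = - Z i i by rewrite -{1}[Z]trmxK ZT !mxE.
  move/eqP; rewrite -subr_eq0 opprK -mulr2n -mulr_natr mulf_eq0 (negbTE H2) orbF.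
  by move/eqP.
have [SZ TZ] := SZT HZ.
have HA := schur B Rm (- Rm^T) KQ.
have D3 : block_mx K 0 0 (block_mx K 0 0 K) *m block_mx Q 0 0 (block_mx Q 0 0 Q) = d%:M.
  by rewrite !mulmx_block !mulmx0 !mul0mx !addr0 !add0r KQ -!scalar_mx_block.
have HM := schur B (row_mx (Sm R *m Rm) (row_mx Rm ((Sm R)^T *m Rm)))
    (col_mx (- Rm^T *m (Sm R)^T) (col_mx (- Rm^T) (- Rm^T *m Sm R))) D3.
rewrite !det_ublock in HM.
have E : row_mx (Sm R *m Rm) (row_mx Rm ((Sm R)^T *m Rm)) *m block_mx Q 0 0 (block_mx Q 0 0 Q) *m
    col_mx (- Rm^T *m (Sm R)^T) (col_mx (- Rm^T) (- Rm^T *m Sm R)) = Z.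
  rewrite !mul_row_block !mulmx0 !addr0 !add0r !mul_row_col.
  rewrite /Z !mulmxA in SZ TZ *.
  by rewrite SZ TZ add0r addr0.
rewrite E in HM.
rewrite /Amat /Mmat -/Z.
apply: (mulIf (_ : d ^+ 2 != 0)); first by rewrite expf_neq0.
rewrite HM -mulrA HA -/Z -/d.
ring.
Qed.

Lemma map_Sm (R S : nzRingType) (f : {rmorphism R -> S}) : map_mx f (Sm R) = Sm S.
Proof. by apply/matrixP => i j; rewrite !mxE rmorph_nat. Qed.

Lemma map_tr (R S : Type) (f : R -> S) p q (X : 'M[R]_(p,q)) : map_mx f X^T = (map_mx f X)^T.
Proof. by apply/matrixP => i j; rewrite !mxE. Qed.

Lemma map_Mmat (R S : nzRingType) (f : {rmorphism R -> S}) m (B : 'M[R]_2) (Rm : 'M[R]_(2,m)) (K : 'M[R]_m) :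
  map_mx f (Mmat B Rm K) = Mmat (map_mx f B) (map_mx f Rm) (map_mx f K).
Proof.
by rewrite /Mmat !(map_block_mx, map_row_mx, map_col_mx, map_mxM, map_mxN, map_tr, map_mx0, map_Sm).
Qed.

Lemma map_Amat (R S : nzRingType) (f : {rmorphism R -> S}) m (B : 'M[R]_2) (Rm : 'M[R]_(2,m)) (K : 'M[R]_m) :
  map_mx f (Amat B Rm K) = Amat (map_mx f B) (map_mx f Rm) (map_mx f K).
Proof.
by rewrite /Amat !(map_block_mx, map_row_mx, map_col_mx, map_mxM, map_mxN, map_tr, map_mx0).
Qed.

Definition J m : 'M[int]_m :=
  \matrix_(i, j) (((j == i.+1 :> nat) && ~~ odd i)%:R - ((i == j.+1 :> nat) && ~~ odd j)%:R).

Lemma J_skew m : (J m)^T = - J m.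
Proof. by apply/matrixP => i j; rewrite !mxE opprB. Qed.

Lemma JE_nat (i k : nat) : ((k == i.+1) && ~~ odd i)%:R - ((i == k.+1) && ~~ odd k)%:R =
  (if ~~ odd i then (k == i.+1)%:R else - (k.+1 == i)%:R :> int).
Proof.
case: (eqVneq k i.+1) => [->|ne].
  have -> : (i == i.+2) = false by lia.
  have -> : (i.+2 == i) = false by lia.
  by case: (odd i).
case: (eqVneq i k.+1) => [->|ne2] /=.
  by rewrite negbK; case: (odd k).
by case: (odd i); rewrite ?subr0 ?oppr0.
Qed.

Lemma JE m (i k : 'I_m) : J m i k = if ~~ odd i then ((k == i.+1 :> nat))%:R else - ((k.+1 == i :> nat))%:R.
Proof. by rewrite mxE JE_nat. Qed.

Lemma JJ m : ~~ odd m -> J m *m J m = - 1%:M.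
Proof.
move=> Hm; apply/matrixP => i j; rewrite !mxE.
case: (boolP (odd i)) => oi.
  have h : (i.-1 < m)%N by move: (ltn_ord i); lia.
  have ip : i = (i.-1).+1 :> nat by move: oi; case: (nat_of_ord i).
  rewrite (bigD1 (Ordinal h)) //= big1 ?addr0.
    rewrite !JE oi /= -ip eqxx.
    have -> : odd i.-1 = false by move: oi; rewrite {1}ip /= => /negbTE.
    rewrite /= mulN1r -[i == j]val_eqE /= eq_sym.
    by rewrite val_eqE.
  move=> k; rewrite -val_eqE /= => ne; rewrite JE oi /=.
  suff -> : (k.+1 == i :> nat) = false by rewrite oppr0 mul0r.
  by apply/negbTE; move: ne; lia.
have h : (i.+1 < m)%N.
  have : (i.+1 != m)%N by apply/eqP => E; move: Hm; rewrite -E /= oi.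
  by move: (ltn_ord i); lia.
rewrite (bigD1 (Ordinal h)) //= big1 ?addr0.
  rewrite !JE oi /= eqxx mul1r eqSS.
  rewrite -[i == j]val_eqE oi /= eq_sym.
  by rewrite val_eqE.
move=> k; rewrite -val_eqE /= => ne; rewrite JE oi /=.
by rewrite (negbTE ne) mul0r.
Qed.

Lemma detJ m : ~~ odd m -> \det (J m) != 0.
Proof.
move=> Hm; apply/negP => /eqP H.
have := det_mulmx (J m) (J m); rewrite JJ // H mul0r.
have -> : - (1%:M : 'M[int]_m) = (-1)%:M by apply/matrixP => i j; rewrite !mxE mulNrn.
by rewrite det_scalar => /eqP; rewrite signr_eq0.
Qed.

Lemma core_int m (B : 'M[int]_2) (Rm : 'M[int]_(2,m)) (K : 'M[int]_m) :
  K^T = - K -> ~~ odd m -> \det (Mmat B Rm K) = \det K ^+ 2 * \det (Amat B Rm K).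
Proof.
move=> HK Hm.
pose K' : 'M[{poly int}]_m := map_mx polyC K + 'X *: map_mx polyC (J m).
have HK' : K'^T = - K'.
  have HJ := J_skew m.
  apply/matrixP => i j; rewrite !mxE.
  have := congr1 (fun M : 'M_m => M i j) HK; rewrite !mxE => ->.
  have := congr1 (fun M : 'M_m => M i j) HJ; rewrite !mxE => ->.
  by rewrite !polyCN mulrN opprD.
have dK' : \det K' != 0.
  have -> : K' = map_mx polyC (J m) *m char_poly_mx (J m *m K).
    rewrite /char_poly_mx mulmxBr map_mxM mulmxA -map_mxM JJ // mul_mx_scalar.
    by rewrite map_mxN map_mx1 mulNmx mul1mx opprK addrC.
  rewrite det_mulmx det_map_mx mulf_eq0 negb_or polyC_eq0 detJ //=.
  exact: (monic_neq0 (char_poly_monic _)).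
have H2 : (2%:R : {poly int}) != 0 by rewrite -(rmorph_nat (@polyC int)) polyC_eq0.
have := core (map_mx polyC B) (map_mx polyC Rm) HK' Hm H2 dK'.
move=> /(congr1 (horner_eval 0)).
rewrite rmorphM rmorphXn -!det_map_mx map_Mmat map_Amat.
have E1 : forall p q (X : 'M[int]_(p,q)), map_mx (horner_eval 0) (map_mx polyC X) = X.
  by move=> p q X; apply/matrixP => i j; rewrite !mxE horner_evalE hornerC.
have E2 : map_mx (horner_eval 0) K' = K.
  by apply/matrixP => i j; rewrite !mxE horner_evalE !hornerE.
by rewrite !E1 E2.
Qed.

Lemma SmE (R : pzRingType) q (X : 'M[R]_(2,q)) i j :
  (Sm R *m X) i j = if (i : nat) == 0%N then X (Ordinal (isT : (1 < 2)%N)) j else 0.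
Proof.
rewrite !mxE !big_ord_recl big_ord0 !mxE /=.
have -> : lift ord0 ord0 = Ordinal (isT : (1 < 2)%N) :> 'I_2 by apply: val_inj.
by case: i => [[|[|i]] Hi] //=; rewrite ?mul0r ?mul1r ?add0r ?addr0.
Qed.

Lemma SmTE (R : pzRingType) q (X : 'M[R]_(2,q)) i j :
  ((Sm R)^T *m X) i j = if (i : nat) == 1%N then X ord0 j else 0.
Proof.
rewrite !mxE !big_ord_recl big_ord0 !mxE /=.
have -> : lift ord0 ord0 = Ordinal (isT : (1 < 2)%N) :> 'I_2 by apply: val_inj.
by case: i => [[|[|i]] Hi] //=; rewrite ?mul0r ?mul1r ?add0r ?addr0.
Qed.

Lemma XSmTE (R : pzRingType) q (X : 'M[R]_(q,2)) i j :
  (X *m (Sm R)^T) i j = if (j : nat) == 0%N then X i (Ordinal (isT : (1 < 2)%N)) else 0.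
Proof.
rewrite !mxE !big_ord_recl big_ord0 !mxE /=.
have -> : lift ord0 ord0 = Ordinal (isT : (1 < 2)%N) :> 'I_2 by apply: val_inj.
by case: j => [[|[|j]] Hj] //=; rewrite ?mulr0 ?mulr1 ?add0r ?addr0.
Qed.

Lemma XSmE (R : pzRingType) q (X : 'M[R]_(q,2)) i j :
  (X *m Sm R) i j = if (j : nat) == 1%N then X i ord0 else 0.
Proof.
rewrite !mxE !big_ord_recl big_ord0 !mxE /=.
have -> : lift ord0 ord0 = Ordinal (isT : (1 < 2)%N) :> 'I_2 by apply: val_inj.
by case: j => [[|[|j]] Hj] //=; rewrite ?mulr0 ?mulr1 ?add0r ?addr0.
Qed.

Lemma nvS g : (1 <= g)%N -> nv g.+1 = (4 * nv g - 4)%N.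
Proof. by case: g. Qed.

Lemma nv_ge4 g : (4 <= nv g)%N.
Proof. elim: g => [|[|g] IH] //. rewrite nvS //; lia. Qed.

Lemma nv_even g : ~~ odd (nv g).
Proof.
elim: g => [|[|g] IH] //.
rewrite [nv _]/=; have := nv_ge4 g.+1.
move: IH; set x := nv g.+1 => IH Hx.
have -> : (4 * x - 4 = (2 * x - 2).*2)%N by rewrite -muln2; lia.
by rewrite odd_double.
Qed.

Lemma harcS g u v : (1 <= g)%N -> harc g.+1 u v =
  [exists c : 'I_4, exists a : 'I_(nv g), exists b : 'I_(nv g),
         [&& harc g a b, emb g c a == u & emb g c b == v]].
Proof. by case: g. Qed.

Lemma harc_base_no2 u v : ~~ (harc 1 u v && harc 1 v u).
Proof. by rewrite /=; case: u => [|[|[|[|u]]]]; case: v => [|[|[|[|v]]]]. Qed.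

Lemma emb_eq g c c' x x' : (c < 4)%N -> (c' < 4)%N -> (x < nv g)%N -> (x' < nv g)%N ->
  emb g c x = emb g c' x' -> (c = c' /\ x = x') \/ (x < 2 /\ x' < 2)%N.
Proof.
have := nv_ge4 g; rewrite /emb; move: (nv g) => n Hn.
case: c => [|[|[|[|c]]]] // _; case: c' => [|[|[|[|c']]]] // _ /=;
  repeat (case: ifP => /eqP ?); lia.
Qed.

Lemma hub_same g c b b' : (c < 4)%N -> (b < 2)%N -> (b' < 2)%N -> emb g c b = emb g c b' -> b = b'.
Proof.
rewrite /emb; case: c => [|[|[|[|c]]]] // _; case: b => [|[|b]] // _; case: b' => [|[|b']] //.
Qed.

Lemma hub_uniq g c c' a b a' b' : (c < 4)%N -> (c' < 4)%N -> (a < 2)%N -> (b < 2)%N -> (a' < 2)%N -> (b' < 2)%N ->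
  a != b -> emb g c a = emb g c' a' -> emb g c b = emb g c' b' -> [/\ c = c', a = a' & b = b'].
Proof.
rewrite /emb; case: c => [|[|[|[|c]]]] // _; case: c' => [|[|[|[|c']]]] // _;
case: a => [|[|a]] // _; case: b => [|[|b]] // _; case: a' => [|[|a']] // _; case: b' => [|[|b']] //.
Qed.

Lemma pair_uniq g c c' a b a' b' : (c < 4)%N -> (c' < 4)%N -> (a < nv g)%N -> (b < nv g)%N ->
  (a' < nv g)%N -> (b' < nv g)%N ->
  a != b -> emb g c a = emb g c' a' -> emb g c b = emb g c' b' -> [/\ c = c', a = a' & b = b'].
Proof.
move=> Hc Hc' Ha Hb Ha' Hb' nab Ea Eb.
case: (emb_eq Hc Hc' Ha Ha' Ea) => [[ec ea]|[a2 a2']];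
case: (emb_eq Hc Hc' Hb Hb' Eb) => [[ec' eb]|[b2 b2']].
- by subst.
- subst; split => //; exact: hub_same Hc b2 b2' Eb.
- subst; split => //; exact: hub_same Hc a2 a2' Ea.
- exact: (hub_uniq Hc Hc' a2 b2 a2' b2' nab Ea Eb).
Qed.

Lemma no2 g u v : ~~ (harc g u v && harc g v u).
Proof.
elim: g u v => [|g IH] u v.
  by rewrite /=; case: u => [|[|[|[|u]]]]; case: v => [|[|[|[|v]]]].
case: g IH => [|g] IH; first exact: harc_base_no2.
rewrite !harcS //; apply/negP.
move=> /andP [/existsP [c /existsP [a /existsP [b /and3P [h /eqP ea /eqP eb]]]]
  /existsP [c' /existsP [a' /existsP [b' /and3P [h' /eqP ea' /eqP eb']]]]].
have ab : (a : nat) != b.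
  apply/eqP => e; move: (IH a a); rewrite -[in harc _ a b]e in h; by rewrite h.
have [ec e1 e2] := pair_uniq (ltn_ord c) (ltn_ord c') (ltn_ord a) (ltn_ord b) (ltn_ord b') (ltn_ord a') ab
  (etrans ea (esym eb')) (etrans eb (esym ea')).
move: h'; rewrite -e1 -e2 => h'.
by move: (IH a b); rewrite h h'.
Qed.

Lemma skew_anti g u v : skew g u v = - skew g v u.
Proof.
rewrite /skew; have := no2 g u v.
by case: (harc g u v); case: (harc g v u); rewrite ?opprK ?oppr0.
Qed.

Lemma skew_diag g u : skew g u u = 0.
Proof. by rewrite /skew; have := no2 g u u; case: (harc g u u). Qed.

Lemma harc_same g c a b : (1 <= g)%N -> (c < 4)%N -> (a < nv g)%N -> (b < nv g)%N -> a != b ->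
  harc g.+1 (emb g c a) (emb g c b) = harc g a b.
Proof.
move=> g1 Hc Ha Hb ab; rewrite harcS //; apply/idP/idP.
  move=> /existsP [c' /existsP [a' /existsP [b' /and3P [h /eqP e1 /eqP e2]]]].
  have ab' : (a' : nat) != b'.
    apply/eqP => e; move: (no2 g a' a'); rewrite -[in harc _ a' b']e in h; by rewrite h.
  have [_ <- <-] := pair_uniq (ltn_ord c') Hc (ltn_ord a') (ltn_ord b') Ha Hb ab' e1 e2.
  exact: h.
move=> h; apply/existsP; exists (Ordinal Hc); apply/existsP; exists (Ordinal Ha).
by apply/existsP; exists (Ordinal Hb); rewrite /= h !eqxx.
Qed.

Lemma skew_same g c a b u v : (1 <= g)%N -> (c < 4)%N -> (a < nv g)%N -> (b < nv g)%N ->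
  emb g c a = u -> emb g c b = v -> skew g.+1 u v = skew g a b.
Proof.
move=> g1 Hc Ha Hb <- <-.
case: (eqVneq a b) => [<-|ab]; first by rewrite !skew_diag.
by rewrite /skew !harc_same // eq_sym.
Qed.

Lemma harc_none g u v : (1 <= g)%N ->
  (forall c a b, (c < 4)%N -> (a < nv g)%N -> (b < nv g)%N -> emb g c a = u -> emb g c b = v -> False) ->
  harc g.+1 u v = false.
Proof.
move=> g1 H; rewrite harcS //; apply/negbTE/negP.
case/existsP => c /existsP [a /existsP [b /and3P [h /eqP e1 /eqP e2]]].
exact: (H c a b (ltn_ord c) (ltn_ord a) (ltn_ord b) e1 e2).
Qed.

Lemma skew_none g u v : (1 <= g)%N ->
  (forall c a b, (c < 4)%N -> (a < nv g)%N -> (b < nv g)%N -> emb g c a = u -> emb g c b = v -> False) ->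
  skew g.+1 u v = 0.
Proof.
move=> g1 H; rewrite /skew harc_none // harc_none //.
by move=> c a b Hc Ha Hb e1 e2; exact: (H c b a Hc Hb Ha e2 e1).
Qed.

Lemma mxF_block (R : Type) p q (F : nat -> nat -> R) :
  \matrix_(i < p + q, j < p + q) F i j =
  block_mx (\matrix_(i < p, j < p) F i j) (\matrix_(i < p, j < q) F i (p + j)%N)
           (\matrix_(i < q, j < p) F (p + i)%N j) (\matrix_(i < q, j < q) F (p + i)%N (p + j)%N).
Proof.
apply/matrixP => i j; rewrite -[i]splitK -[j]splitK.
case: (split i) => k; case: (split j) => l;
rewrite /= ?block_mxEul ?block_mxEur ?block_mxEdl ?block_mxEdr !mxE //.
Qed.
Lemma mxF_row (R : Type) r q1 q2 (F : nat -> nat -> R) :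
  \matrix_(i < r, j < q1 + q2) F i j =
  row_mx (\matrix_(i < r, j < q1) F i j) (\matrix_(i < r, j < q2) F i (q1 + j)%N).
Proof.
apply/matrixP => i j; rewrite -[j]splitK.
case: (split j) => l; rewrite /= ?row_mxEl ?row_mxEr !mxE //.
Qed.
Lemma mxF_col (R : Type) r1 r2 q (F : nat -> nat -> R) :
  \matrix_(i < r1 + r2, j < q) F i j =
  col_mx (\matrix_(i < r1, j < q) F i j) (\matrix_(i < r2, j < q) F (r1 + i)%N j).
Proof.
apply/matrixP => i j; rewrite -[i]splitK.
case: (split i) => l; rewrite /= ?col_mxEu ?col_mxEd !mxE //.
Qed.
Lemma det_cast (R : comPzRingType) N N' (F : nat -> nat -> R) : N = N' ->
  \det (\matrix_(i < N, j < N) F i j) = \det (\matrix_(i < N', j < N') F i j).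
Proof. by move->. Qed.

Lemma det_mxF_ublock (R : comPzRingType) p q (F : nat -> nat -> R) :
  (forall i j, (i < q)%N -> (j < p)%N -> F (p + i)%N j = 0) ->
  \det (\matrix_(i < p + q, j < p + q) F i j) =
  \det (\matrix_(i < p, j < p) F i j) * \det (\matrix_(i < q, j < q) F (p + i)%N (p + j)%N).
Proof.
move=> H; rewrite mxF_block (_ : \matrix_(i < q, j < p) F (p + i)%N j = 0) ?det_ublock //.
by apply/matrixP => i j; rewrite !mxE H.
Qed.

Ltac emb_tac := try rewrite /emb /=; repeat (case: ifP => /eqP ?); lia.
Ltac none_tac := rewrite skew_none //; move=> + a b; case=> [|[|[|[|?]]]] //= _ Ha Hb;
  rewrite /emb /=; repeat (case: ifP => /eqP ?); lia.
Ltac same_tac c := apply: (@skew_same _ c); emb_tac.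

Theorem lemma7 (g : nat) (hg : (1 <= g)%N) :
  \det (K g.+1) = (\det (K g)) ^+ 3 * \det (A g).
Proof.
have Hn4 := nv_ge4 g.
pose G := fun i j : nat => skew g.+1 (i + 2) (j + 2).
have E1 : \det (K g.+1) = \det (\matrix_(i < (2 + ((nv g - 2) + ((nv g - 2) + (nv g - 2)))) + (nv g - 2),
    j < (2 + ((nv g - 2) + ((nv g - 2) + (nv g - 2)))) + (nv g - 2)) G i j).
  by rewrite /K; apply: det_cast; rewrite nvS //; lia.
rewrite E1 det_mxF_ublock; last first.
  by move=> i j Hi Hj; rewrite /G; none_tac.
have E4 : \matrix_(i < nv g - 2, j < nv g - 2) G (2 + (nv g - 2 + (nv g - 2 + (nv g - 2))) + i)%N
                         (2 + (nv g - 2 + (nv g - 2 + (nv g - 2))) + j)%N = K g.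
  apply/matrixP => i j; rewrite !mxE /G; move: (ltn_ord i) (ltn_ord j) => Hi Hj.
  same_tac 3%N.
rewrite E4.
pose Bg := \matrix_(i < 2, j < 2) skew g i j.
pose Rg := \matrix_(i < 2, j < nv g - 2) skew g i (2 + j).
have KT : (K g)^T = - K g by apply/matrixP => i j; rewrite !mxE skew_anti.
have EA : \det (A g) = \det (Amat Bg Rg (K g)).
  rewrite /A (det_cast (N' := (2 + (nv g - 2))%N)); last by lia.
  rewrite mxF_block /Amat; congr (\det (block_mx _ _ _ _)).
    by apply/matrixP => i j; rewrite !mxE skew_anti.
  by apply/matrixP => i j; rewrite !mxE addnC [(2 + j)%N]addnC.
have EM : \matrix_(i < 2 + (nv g - 2 + (nv g - 2 + (nv g - 2))), j < 2 + (nv g - 2 + (nv g - 2 + (nv g - 2)))) G i j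
   = Mmat Bg Rg (K g).
  rewrite mxF_block /Mmat; congr (block_mx _ _ _ _).
  - apply/matrixP => i j; move: (ltn_ord i) (ltn_ord j) => Hi Hj; rewrite !mxE /G.
    same_tac 1%N.
  - rewrite (@mxF_row _ _ _ _ (fun i j => G i (2 + j)%N)) (@mxF_row _ _ _ _ (fun i j => G i (2 + (nv g - 2 + j))%N)); congr (row_mx _ (row_mx _ _)).
    + apply/matrixP => i j; move: (ltn_ord j) => Hj; rewrite SmE !mxE /G.
      case: i => [[|[|i]] Hi] //=; [same_tac 0%N | none_tac].
    + apply/matrixP => i j; move: (ltn_ord j) => Hj; rewrite !mxE /G.
      case: i => [[|[|i]] Hi] //=; [same_tac 1%N | same_tac 1%N].
    + apply/matrixP => i j; move: (ltn_ord j) => Hj; rewrite SmTE !mxE /G.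
      case: i => [[|[|i]] Hi] //=; [none_tac | same_tac 2%N].
  - rewrite (@mxF_col _ _ _ _ (fun i j => G (2 + i)%N j)) (@mxF_col _ _ _ _ (fun i j => G (2 + (nv g - 2 + i))%N j)); congr (col_mx _ (col_mx _ _)).
    + apply/matrixP => i j; move: (ltn_ord i) => Hi; rewrite XSmTE !mxE /G.
      case: j => [[|[|j]] Hj] //=; [rewrite -skew_anti; same_tac 0%N | none_tac].
    + apply/matrixP => i j; move: (ltn_ord i) => Hi; rewrite !mxE /G.
      case: j => [[|[|j]] Hj] //=; rewrite -skew_anti; same_tac 1%N.
    + apply/matrixP => i j; move: (ltn_ord i) => Hi; rewrite XSmE !mxE /G.
      case: j => [[|[|j]] Hj] //=; [none_tac | rewrite -skew_anti; same_tac 2%N].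
  - rewrite (@mxF_block _ _ _ (fun i j => G (2 + i)%N (2 + j)%N)) (@mxF_block _ _ _ (fun i j => G (2 + (nv g - 2 + i))%N (2 + (nv g - 2 + j))%N)); congr (block_mx _ _ _ (block_mx _ _ _ _));
      apply/matrixP => i j; move: (ltn_ord i) (ltn_ord j) => Hi Hj; rewrite !mxE /G.
    + same_tac 0%N.
    + none_tac.
    + none_tac.
    + same_tac 1%N.
    + none_tac.
    + none_tac.
    + same_tac 2%N.
have ev : ~~ odd (nv g - 2).
  by rewrite oddB; [rewrite addbF; exact: nv_even | lia].
rewrite EM core_int // EA; ring.
Qed.
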